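(* Let $\kappa>0$, $u_0>0$, and consider the sessile liquid channel with parameter $u_0$ and contact angle $\gamma\in(0,\pi/2]$ resting on $\Pi$, with volume $\mathcal V(\gamma)$. Then $$\mathcal V(\gamma)>\frac{\gamma-\sin\gamma\cos\gamma}{\kappa^2u(\gamma)^2}.$$
   Context: For $u_0>0$, $(r(\psi),u(\psi))$, $\psi\in[0,\pi]$, is the solution of $\frac{dr}{d\psi}=\frac{\cos\psi}{\kappa u}$, $\frac{du}{d\psi}=\frac{\sin\psi}{\kappa u}$, $r(0)=0$, $u(0)=u_0$ (profile of a $\kappa$-cylindrical surface parametrized by inclination angle). The channel with contact angle $\gamma$ is the arc $\psi\in[0,\gamma]$ reflected in $r\mapsto-r$, resting on the line $u=u(\gamma)$; its volume per unit length is $\mathcal V(\gamma)=2\big(r(\gamma)u(\gamma)-\frac{\sin\gamma}\kappa\big)$. *)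

(* Defs.v *)
From Stdlib Require Import Reals Lra.
From Coquelicot Require Import Coquelicot.
Open Scope R_scope.

(* (r,u) is the profile of a kappa-cylindrical surface parametrized by the
   inclination angle psi in [0,pi], with parameter u0:
     dr/dpsi = cos psi / (kappa u),  du/dpsi = sin psi / (kappa u),
     r(0) = 0, u(0) = u0,
   with u nonvanishing on [0,pi] so that the ODE makes sense. *)
Definition kappa_profile (kappa u0 : R) (r u : R -> R) : Prop :=
  r 0 = 0 /\ u 0 = u0 /\
  (forall psi, 0 <= psi <= PI -> u psi <> 0) /\
  (forall psi, 0 <= psi <= PI -> is_derive r psi (cos psi / (kappa * u psi))) /\
  (forall psi, 0 <= psi <= PI -> is_derive u psi (sin psi / (kappa * u psi))).

Definition channel_volume (kappa : R) (r u : R -> R) (gamma : R) : R :=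
  2 * (r gamma * u gamma - sin gamma / kappa).

(* Main.v *)
Require Import Defs.
From Stdlib Require Import Reals Lra.
From Coquelicot Require Import Coquelicot.
Open Scope R_scope.

Lemma dcont (f : R -> R) x l : derivable_pt_lim f x l -> continuity_pt f x.
Proof.
  intro H. apply derivable_continuous_pt. exists l. exact H.
Qed.

Lemma dl_eq (f : R -> R) x l l' : derivable_pt_lim f x l -> l = l' -> derivable_pt_lim f x l'.
Proof. intros H ->; exact H. Qed.

Lemma mvt (f df : R -> R) a b :
  a <= b ->
  (forall x, a <= x <= b -> derivable_pt_lim f x (df x)) ->
  exists c, a <= c <= b /\ f b - f a = df c * (b - a).
Proof.
  intros hab H.
  destruct (MVT_gen f a b df) as [c [hc e]].
  - rewrite Rmin_left, Rmax_right by lra. intros x hx. apply is_derive_Reals, H; lra.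
  - rewrite Rmin_left, Rmax_right by lra. intros x hx. eapply dcont, H; lra.
  - rewrite Rmin_left, Rmax_right in hc by lra. exists c; auto.
Qed.

Theorem mainTheorem14 (kappa u0 : R) (r u : R -> R) (gamma : R) :
  0 < kappa -> 0 < u0 ->
  kappa_profile kappa u0 r u ->
  0 < gamma <= PI / 2 ->
  channel_volume kappa r u gamma >
    (gamma - sin gamma * cos gamma) / (kappa ^ 2 * (u gamma) ^ 2).
Proof.
  intros hk hu0 [r0 [u0e [unz [dr du]]]] hg.
  assert (PIpos := PI_RGT_0).
  assert (dr' : forall x, 0 <= x <= PI -> derivable_pt_lim r x (cos x / (kappa * u x)))
    by (intros; apply is_derive_Reals, dr; auto).
  assert (du' : forall x, 0 <= x <= PI -> derivable_pt_lim u x (sin x / (kappa * u x)))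
    by (intros; apply is_derive_Reals, du; auto).
  clear dr du.
  assert (upos : forall x, 0 <= x <= PI -> 0 < u x).
  { intros x hx.
    destruct (Rlt_or_le 0 (u x)) as [h|h]; auto.
    assert (hlt : u x < 0) by (destruct h as [h|h]; auto; exfalso; apply (unz x hx); auto).
    assert (x0 : 0 < x) by (destruct (Req_dec x 0) as [e|e]; [subst; lra | lra]).
    destruct (Ranalysis5.IVT_interv (fun t => - u t) 0 x) as [z [hz ez]].
    - intros a ha. apply continuity_pt_opp. eapply dcont, du'; lra.
    - exact x0.
    - lra.
    - lra.
    - exfalso. apply (unz z). lra. lra. }
  assert (usq : forall x, 0 <= x <= PI -> u x ^ 2 = u0 ^ 2 + 2 * (1 - cos x) / kappa).
  { intros x hx.
    destruct (mvt (fun t => u t * u t - 2 * (1 - cos t) / kappa) (fun _ => 0) 0 x) as [c [hc e]].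
    - lra.
    - intros t ht. eapply dl_eq.
      + apply derivable_pt_lim_minus.
        * apply derivable_pt_lim_mult; apply du'; lra.
        * apply derivable_pt_lim_div. 
          -- apply derivable_pt_lim_mult. apply derivable_pt_lim_const.
             apply derivable_pt_lim_minus. apply derivable_pt_lim_const. apply derivable_pt_lim_cos.
          -- apply derivable_pt_lim_const.
          -- lra.
      + assert (0 < u t) by (apply upos; lra). cbv beta. unfold Rsqr. field. split; lra.
    - rewrite cos_0, u0e in e. replace (u x ^ 2) with (u x * u x) by ring. replace (u0 ^ 2) with (u0 * u0) by ring. lra. }
  set (U := u gamma).
  assert (hU : 0 < U) by (apply upos; lra).
  assert (ule : forall x, 0 <= x <= gamma -> u x <= U).
  { intros x hx. assert (0 < u x) by (apply upos; lra).
    assert (u x ^ 2 <= U ^ 2).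
    { unfold U; rewrite !usq by lra.
      destruct (Req_dec x gamma) as [->|ne]; [lra|].
      assert (cos gamma < cos x) by (apply cos_decreasing_1; lra).
      apply Rplus_le_compat_l. unfold Rdiv. apply Rmult_le_compat_r.
      left; apply Rinv_0_lt_compat; lra. lra. }
    nra. }
  assert (ult : forall x, 0 <= x < gamma -> u x < U).
  { intros x hx. assert (0 < u x) by (apply upos; lra).
    assert (u x ^ 2 < U ^ 2).
    { unfold U; rewrite !usq by lra.
      assert (cos gamma < cos x) by (apply cos_decreasing_1; lra).
      apply Rplus_lt_compat_l. unfold Rdiv. apply Rmult_lt_compat_r.
      apply Rinv_0_lt_compat; lra. lra. }
    nra. }
  assert (rge : forall x, 0 <= x <= gamma -> sin x / (kappa * U) <= r x).
  { intros x hx.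
    destruct (mvt (fun t => r t - sin t / (kappa * U))
              (fun t => cos t / (kappa * u t) - cos t / (kappa * U)) 0 x) as [c [hc e]].
    - lra.
    - intros t ht. apply derivable_pt_lim_minus. apply dr'; lra.
      eapply dl_eq. apply derivable_pt_lim_div. apply derivable_pt_lim_sin.
      apply derivable_pt_lim_const. apply Rgt_not_eq. apply Rmult_lt_0_compat; lra.
      cbv beta; unfold Rsqr; field. split; lra.
    - rewrite r0, sin_0 in e.
      assert (0 <= cos c) by (apply cos_ge_0; lra).
      assert (0 < u c) by (apply upos; lra).
      assert (u c <= U) by (apply ule; lra).
      assert (0 <= cos c / (kappa * u c) - cos c / (kappa * U)).
      { unfold Rdiv. rewrite <- Rmult_minus_distr_l. apply Rmult_le_pos; auto.
        apply Rge_le, Rge_minus, Rle_ge. apply Rinv_le_contravar. apply Rmult_lt_0_compat; lra.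
        apply Rmult_le_compat_l; lra. }
      assert (0 <= sin x / (kappa * U)).
      { apply Rmult_le_pos. apply sin_ge_0; lra. left; apply Rinv_0_lt_compat, Rmult_lt_0_compat; lra. }
      nra. }
  set (F := fun t => r t * u t - sin t / kappa - (t - sin t * cos t) / (2 * kappa ^ 2 * U ^ 2)).
  set (dF := fun t => r t * (sin t / (kappa * u t)) - (sin t) ^ 2 / (kappa ^ 2 * U ^ 2)).
  assert (hdF : forall t, 0 <= t <= gamma -> derivable_pt_lim F t (dF t)).
  { intros t ht. assert (0 < u t) by (apply upos; lra).
    unfold F, dF. eapply dl_eq.
    - apply derivable_pt_lim_minus. apply derivable_pt_lim_minus.
      apply derivable_pt_lim_mult. apply dr'; lra. apply du'; lra.
      apply derivable_pt_lim_div. apply derivable_pt_lim_sin. apply derivable_pt_lim_const. lra.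
      apply derivable_pt_lim_div. apply derivable_pt_lim_minus. apply derivable_pt_lim_id.
      apply derivable_pt_lim_mult. apply derivable_pt_lim_sin. apply derivable_pt_lim_cos.
      apply derivable_pt_lim_const. 
      apply Rgt_not_eq. apply Rmult_lt_0_compat. apply Rmult_lt_0_compat. lra. apply pow_lt; lra.
      apply pow_lt; lra.
    - assert (sin t ^ 2 + cos t ^ 2 = 1) by (rewrite <- (sin2_cos2 t); unfold Rsqr; ring).
      cbv beta. unfold Rsqr. replace (cos t * cos t) with (1 - sin t ^ 2) by lra.
      field. repeat split; lra. }
  assert (dFge : forall t, 0 <= t <= gamma -> 0 <= dF t /\ (0 < t < gamma -> 0 < dF t)).
  { intros t ht.
    assert (hs : 0 <= sin t) by (apply sin_ge_0; lra).
    assert (hut : 0 < u t) by (apply upos; lra).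
    assert (hle : u t <= U) by (apply ule; lra).
    assert (hr : sin t / (kappa * U) <= r t) by (apply rge; lra).
    assert (a0 : 0 <= sin t / (kappa * U)).
    { apply Rmult_le_pos; auto. left; apply Rinv_0_lt_compat, Rmult_lt_0_compat; lra. }
    assert (i1 : sin t / (kappa * U) <= sin t / (kappa * u t)).
    { apply Rmult_le_compat_l; auto. apply Rinv_le_contravar. apply Rmult_lt_0_compat; lra.
      apply Rmult_le_compat_l; lra. }
    assert (e2 : sin t ^ 2 / (kappa ^ 2 * U ^ 2) = sin t / (kappa * U) * (sin t / (kappa * U)))
      by (field; lra).
    unfold dF; rewrite e2. split.
    - assert (sin t / (kappa * U) * (sin t / (kappa * U)) <= sin t / (kappa * U) * (sin t / (kappa * u t)))
        by (apply Rmult_le_compat_l; auto).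
      assert (sin t / (kappa * U) * (sin t / (kappa * u t)) <= r t * (sin t / (kappa * u t)))
        by (apply Rmult_le_compat_r; lra).
      lra.
    - intro ht'.
      assert (hs' : 0 < sin t) by (apply sin_gt_0; lra).
      assert (hlt : u t < U) by (apply ult; lra).
      assert (a1 : 0 < sin t / (kappa * U)).
      { apply Rmult_lt_0_compat; auto. apply Rinv_0_lt_compat, Rmult_lt_0_compat; lra. }
      assert (i2 : sin t / (kappa * U) < sin t / (kappa * u t)).
      { apply Rmult_lt_compat_l; auto. apply Rinv_lt_contravar. 
        apply Rmult_lt_0_compat; apply Rmult_lt_0_compat; lra.
        apply Rmult_lt_compat_l; lra. }
      assert (sin t / (kappa * U) * (sin t / (kappa * U)) < sin t / (kappa * U) * (sin t / (kappa * u t)))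
        by (apply Rmult_lt_compat_l; auto).
      assert (sin t / (kappa * U) * (sin t / (kappa * u t)) <= r t * (sin t / (kappa * u t)))
        by (apply Rmult_le_compat_r; lra).
      lra. }
  assert (Fpos : 0 < F gamma - F 0).
  { destruct (mvt F dF 0 (gamma / 4)) as [c1 [h1 e1]]. lra. intros; apply hdF; lra.
    destruct (mvt F dF (gamma / 4) (gamma / 2)) as [c2 [h2 e2]]. lra. intros; apply hdF; lra.
    destruct (mvt F dF (gamma / 2) gamma) as [c3 [h3 e3]]. lra. intros; apply hdF; lra.
    destruct (dFge c1) as [p1 _]. lra.
    destruct (dFge c2) as [_ p2]. lra. specialize (p2 ltac:(lra)).
    destruct (dFge c3) as [p3 _]. lra.
    assert (0 <= dF c1 * (gamma / 4 - 0)) by (apply Rmult_le_pos; lra).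
    assert (0 < dF c2 * (gamma / 2 - gamma / 4)) by (apply Rmult_lt_0_compat; lra).
    assert (0 <= dF c3 * (gamma - gamma / 2)) by (apply Rmult_le_pos; lra).
    lra. }
  assert (F0 : F 0 = 0) by (unfold F; rewrite r0, sin_0; field; split; lra).
  rewrite F0 in Fpos. unfold F in Fpos.
  unfold channel_volume. fold U.
  assert (ee : (gamma - sin gamma * cos gamma) / (kappa ^ 2 * U ^ 2) =
               2 * ((gamma - sin gamma * cos gamma) / (2 * kappa ^ 2 * U ^ 2))) by (field; lra).
  rewrite ee. cbv beta in Fpos. fold U in Fpos. lra.
Qed.
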